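(* The function $S$ is monotonically increasing on $[1,n]$: for $1\leq t'<t\leq n$ we have $S(t')\leq S(t)$. Moreover, if $S(t')>0$ for some $t'\in[1,n]$, then $S(t')<S(t)$ for all $t\in(t',n]$, i.e. $S$ is strictly increasing on $[t',n]$.
   Context: Let $G$ be a simple graph with vertex set $V=\{1,\dots,n\}$, edge set $E$ and adjacency matrix $A$. Let $e$ be the all-ones vector, $\langle M,N\rangle=\operatorname{trace}(M^TN)$, and $X\geq 0$ mean entrywise nonnegativity. For real $t$ with $1\leq t\leq n$, $Q(t)$ is the semidefinite program $$\min \tfrac12\langle A,X\rangle\ \text{ s.t. } X\succeq 0,\ X\geq 0,\ \operatorname{trace}(X)=t,\ Xe=t\operatorname{diag}(X)$$ over symmetric $n\times n$ matrices $X$, and $S(t)$ denotes its optimal value. *)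

(* Defs.v *)
From HB Require Import structures.
From mathcomp Require Import all_boot all_order all_algebra.
From mathcomp Require Import boolp classical_sets reals.
Set Implicit Arguments. Unset Strict Implicit. Unset Printing Implicit Defensive.
Import Order.TTheory GRing.Theory Num.Theory.
Local Open Scope ring_scope.
Local Open Scope classical_set_scope.

Definition simple_graph (n : nat) (E : rel 'I_n) : Prop :=
  symmetric E /\ irreflexive E.

Definition adjmx (R : realType) (n : nat) (E : rel 'I_n) : 'M[R]_n :=
  \matrix_(i, j) (E i j)%:R.

Definition frob (R : realType) (n : nat) (M N : 'M[R]_n) : R := \tr (M^T *m N).

Definition psd (R : realType) (n : nat) (X : 'M[R]_n) : Prop :=
  X^T = X /\ forall v : 'cV[R]_n, 0 <= (v^T *m X *m v) 0 0.

Definition Qfeas (R : realType) (n : nat) (t : R) : set 'M[R]_n :=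
  [set X | psd X /\ (forall i j, 0 <= X i j) /\ \tr X = t /\
           X *m const_mx 1 = t *: (\col_i X i i)].

Definition Sval (R : realType) (n : nat) (E : rel 'I_n) (t : R) : R :=
  inf [set (2%:R)^-1 * frob (adjmx R E) X | X in @Qfeas R n t].

(* Main.v *)
Require Import Defs.
From HB Require Import structures.
From mathcomp Require Import all_boot all_order all_algebra.
From mathcomp Require Import boolp classical_sets reals.
From mathcomp Require Import ring lra.
Import Order.TTheory GRing.Theory Num.Theory.
Local Open Scope ring_scope.

Section Aux.
Variables (R : realType) (n : nat).

Definition dg (X : 'M[R]_n) : 'M[R]_n := diag_mx (\row_i X i i).

Lemma qf_scale (v : 'cV[R]_n) (a b : R) (X D : 'M[R]_n) :
  (v^T *m (a *: X + b *: D) *m v) 0 0 =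
  a * (v^T *m X *m v) 0 0 + b * (v^T *m D *m v) 0 0.
Proof.
by rewrite mulmxDr mulmxDl -!scalemxAr -!scalemxAl !mxE.
Qed.

Lemma qf_dg (v : 'cV[R]_n) (X : 'M[R]_n) : (forall i, 0 <= X i i) ->
  0 <= (v^T *m dg X *m v) 0 0.
Proof.
move=> h; rewrite /dg mul_mx_diag !mxE; apply: sumr_ge0 => i _.
rewrite !mxE -mulrA mulrC -mulrA; apply: mulr_ge0 => //.
by rewrite mulrC -expr2 sqr_ge0.
Qed.


Lemma dgE (X : 'M[R]_n) i j : dg X i j = X i i *+ (i == j).
Proof. by rewrite /dg !mxE. Qed.

Lemma feas_down (t t' : R) (X : 'M[R]_n) : 1 <= t' -> t' <= t -> 1 < t ->
  @Qfeas R n t X ->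
  @Qfeas R n t' ((t' * (t' - 1) / (t * (t - 1))) *: X +
                 (t' * (t - t') / (t * (t - 1))) *: dg X).
Proof.
move=> h1 h2 h3 [[hs hq] [hnn [htr hrow]]].
set a := t' * (t' - 1) / (t * (t - 1)).
set b := t' * (t - t') / (t * (t - 1)).
have hd : t * (t - 1) > 0 by apply: mulr_gt0; lra.
have ha : 0 <= a by rewrite /a; apply: divr_ge0; [apply: mulr_ge0|]; lra.
have hb : 0 <= b by rewrite /b; apply: divr_ge0; [apply: mulr_ge0|]; lra.
have hdiag : forall i, 0 <= X i i by move=> i; apply: hnn.
split; [split|split; [|split]].
- rewrite linearD !linearZ /= hs; congr (_ + _); congr (_ *: _).
  by apply/matrixP => i j; rewrite !mxE eq_sym; case: eqP => [->|].
- move=> v; rewrite qf_scale; apply: addr_ge0; apply: mulr_ge0 => //.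
  exact: qf_dg.
- move=> i j; rewrite /dg !mxE; apply: addr_ge0; apply: mulr_ge0 => //.
  by case: (i == j); rewrite ?mulr1n ?mulr0n.
- rewrite mxtraceD !mxtraceZ /dg mxtrace_diag.
  have -> : \sum_j (\row_i X i i) 0 j = \tr X by apply: eq_bigr => j _; rewrite mxE.
  rewrite htr /a /b; field; lra.
- apply/matrixP => i j.
  have hij : (X *m const_mx 1) i j = t * X i i by rewrite hrow !mxE.
  rewrite mulmxDl -!scalemxAl [in LHS]mxE [_ (a *: _) i j]mxE [_ (b *: _) i j]mxE.
  rewrite hij /dg mul_diag_mx !mxE eqxx mulr1n mulr1.
  rewrite /a /b; field; lra.
Qed.

End Aux.
Arguments dg {R n}.
Arguments feas_down {R n}.
Arguments qf_dg {R n}.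

Section Main.
Variables (R : realType) (n : nat) (E : rel 'I_n).
Hypothesis hG : simple_graph E.
Local Notation A := (adjmx R E).

Lemma frob_ge0 (X : 'M[R]_n) : (forall i j, 0 <= X i j) -> 0 <= frob A X.
Proof.
move=> h; rewrite /frob /mxtrace; apply: sumr_ge0 => i _; rewrite !mxE.
by apply: sumr_ge0 => k _; rewrite !mxE; apply: mulr_ge0 => //; rewrite ler0n.
Qed.

Lemma frob_comb (a b : R) (X : 'M[R]_n) :
  frob A (a *: X + b *: dg X) = a * frob A X.
Proof.
rewrite /frob mulmxDr -!scalemxAr mxtraceD !mxtraceZ.
suff -> : \tr (A^T *m dg X) = 0 by rewrite mulr0 addr0.
rewrite /dg mul_mx_diag /mxtrace; apply: big1 => i _; rewrite !mxE.
by case: hG => _ hirr; rewrite hirr mul0r.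
Qed.

Lemma J_feas : @Qfeas R n n%:R (const_mx 1).
Proof.
split; [split|split; [|split]].
- by rewrite trmx_const.
- move=> v; rewrite /const_mx !mxE.
  have -> : \sum_j (v^T *m \matrix[const_mx_key]_(i, j) (1:R)) 0 j * v j 0 =
            (\sum_j v j 0) * (\sum_j v j 0).
    rewrite big_distrl /=; apply: eq_bigr => j _.
    rewrite mulrC; congr (_ * _); rewrite mxE; apply: eq_bigr => k _.
    by rewrite !mxE mulr1.
  by rewrite -expr2 sqr_ge0.
- by move=> i j; rewrite /const_mx mxE.
- rewrite /mxtrace /const_mx; under eq_bigr do rewrite mxE.
  by rewrite sumr_const card_ord.
- apply/matrixP => i j; rewrite /const_mx !mxE.
  under eq_bigr do rewrite !mxE mulr1.
  by rewrite sumr_const card_ord mulr1.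
Qed.

Definition obj (X : 'M[R]_n) : R := 2%:R^-1 * frob A X.

Lemma Sval_lb (t : R) : has_lbound [set obj X | X in @Qfeas R n t].
Proof.
exists 0 => _ [X [_ [hnn _]] <-]; rewrite /obj; apply: mulr_ge0.
  by rewrite invr_ge0 ler0n.
exact: frob_ge0.
Qed.

Lemma feas_ne (t : R) : 1 < t -> t <= n%:R -> exists X, @Qfeas R n t X.
Proof.
move=> h1 h2; eexists; apply: (feas_down n%:R t) => //; first lra.
  lra.
exact: J_feas.
Qed.

Lemma Sval_ge0 (t : R) : 1 < t -> t <= n%:R -> 0 <= Sval E t.
Proof.
move=> h1 h2; have [X hX] := feas_ne t h1 h2.
apply: lb_le_inf; first by exists (obj X), X.
move=> _ [Y [_ [hnn _]] <-]; apply: mulr_ge0.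
  by rewrite invr_ge0 ler0n.
exact: frob_ge0.
Qed.

Lemma key (t t' : R) : 1 <= t' -> t' < t -> t <= n%:R ->
  Sval E t' <= (t' * (t' - 1) / (t * (t - 1))) * Sval E t.
Proof.
move=> h1 h2 h3.
set a := t' * (t' - 1) / (t * (t - 1)).
have hd : t * (t - 1) > 0 by apply: mulr_gt0; lra.
have ha : 0 <= a by rewrite /a; apply: divr_ge0; [apply: mulr_ge0|]; lra.
have hbound : forall X, @Qfeas R n t X -> Sval E t' <= a * obj X.
  move=> X hX.
  have hY := feas_down t t' X h1 (ltW h2) (le_lt_trans h1 h2) hX.
  apply: le_trans (ge_inf (Sval_lb t') _) _.
    by exists (a *: X + (t' * (t - t') / (t * (t - 1))) *: dg X).
  by rewrite /obj frob_comb mulrCA.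
have ht1 : 1 < t by lra.
have [X0 hX0] := feas_ne t ht1 h3.
have [a0|apos] := eqVneq a 0.
  by rewrite a0 mul0r; have := hbound X0 hX0; rewrite a0 mul0r.
have apos' : 0 < a by rewrite lt_neqAle eq_sym apos ha.
rewrite -ler_pdivrMl //.
apply: lb_le_inf; first by exists (obj X0), X0.
move=> _ [X hX <-]; rewrite ler_pdivrMl //; exact: hbound.
Qed.

End Main.

Theorem mainTheorem10 (R : realType) (n : nat) (E : rel 'I_n)
  (hG : simple_graph E) :
  (forall t' t : R, 1 <= t' -> t' < t -> t <= n%:R -> Sval E t' <= Sval E t) /\
  (forall t' : R, 1 <= t' -> t' <= n%:R -> 0 < Sval E t' ->
     forall t : R, t' < t -> t <= n%:R -> Sval E t' < Sval E t).
Proof.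
have aux : forall t' t : R, 1 <= t' -> t' < t ->
    t' * (t' - 1) / (t * (t - 1)) < 1.
  move=> t' t h1 h2; have hd : t * (t - 1) > 0 by apply: mulr_gt0; lra.
  rewrite ltr_pdivrMr // mul1r.
  have : t' * (t' - 1) <= t' * (t - 1) by apply: ler_wpM2l; lra.
  have : t' * (t - 1) < t * (t - 1) by rewrite ltr_pM2r; lra.
  lra.
have age : forall t' t : R, 1 <= t' -> t' < t ->
    0 <= t' * (t' - 1) / (t * (t - 1)).
  move=> t' t h1 h2; have hd : t * (t - 1) > 0 by apply: mulr_gt0; lra.
  by apply: divr_ge0; [apply: mulr_ge0|]; lra.
split.
- move=> t' t h1 h2 h3.
  have hk := @key R n E hG t t' h1 h2 h3.
  have hs := @Sval_ge0 R n E t ltac:(lra) h3.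
  have := aux t' t h1 h2; have := age t' t h1 h2.
  move=> ha1 ha2.
  apply: le_trans hk _; rewrite -[leRHS]mul1r; apply: ler_wpM2r => //; exact: ltW.
- move=> t' h1 _ hpos t h2 h3.
  have hk := @key R n E hG t t' h1 h2 h3.
  have := aux t' t h1 h2; have := age t' t h1 h2.
  move=> ha1 ha2.
  have hs : 0 < Sval E t.
    rewrite lt_neqAle (@Sval_ge0 R n E t) ?andbT; [|lra|done].
    apply/eqP => h0; move: (hk); rewrite -h0 mulr0; lra.
  apply: le_lt_trans hk _.
  by rewrite -[ltRHS]mul1r ltr_pM2r.
Qed.
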